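(* Let $d\geq 2$ and $m\geq 1$ be integers, let $p=\frac{d+1}{d+m}$ and $Z=p\,\frac{I_d}{d}+(1-p)\,\frac{J_d}{d}$, where $J_d$ is the $d\times d$ all-ones matrix. Then $\mathcal{MR}\!\left(Z,\frac{I_{d+m}}{d+m}\right)\geq d+m$. Moreover, $\mathcal{MR}\!\left(Z,\frac{I_{d+m}}{d+m}\right)=d+m$ for all $m>\frac{d^2-2d-2}{2}$.
   Context: $M_n$ denotes the complex $n\times n$ matrices. For positive semidefinite $A\in M_{d_1}$, $B\in M_{d_2}$, $\mathcal{CP}(M_{d_1},M_{d_2};A,B)$ is the convex set of completely positive maps $\Phi:M_{d_1}\to M_{d_2}$ with $\Phi(I_{d_1})=B$ and $\Phi^*(I_{d_2})=A$ ($\Phi^*$ the Hilbert–Schmidt adjoint); equivalently $\Phi(X)=\sum_iK_iXK_i^\dagger$ with $\sum_iK_i^\dagger K_i=A$, $\sum_iK_iK_i^\dagger=B$. The Choi rank of $\Phi$ is the rank of $\sum_{r,s}E_{rs}\otimes\Phi(E_{rs})$. $\mathcal{MR}(A,B)$ denotes the maximum of the Choi ranks of the extreme points of $\mathcal{CP}(M_{d_1},M_{d_2};A,B)$ (equivalently, via the Choi–Jamiołkowski correspondence, the maximal rank of an extreme point of the convex set of bipartite states on $\mathbb{C}^{d_1}\otimes\mathbb{C}^{d_2}$ with the corresponding fixed marginals). *)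

(* Defs.v *)
From HB Require Import structures.
From mathcomp Require Import all_boot all_order all_algebra.
From mathcomp Require Import complex mxtens.
From mathcomp Require Import boolp reals.

Set Implicit Arguments.
Unset Strict Implicit.
Unset Printing Implicit Defensive.

Import Order.TTheory GRing.Theory Num.Theory.
Local Open Scope ring_scope.

Section QChannels.
Variable R : realType.
Local Notation C := (R[i]).

Definition hadj (m n : nat) (A : 'M[C]_(m, n)) : 'M[C]_(n, m) :=
  (map_mx Num.conj A)^T.

Definition CPset (d1 d2 : nat) (A : 'M[C]_d1) (B : 'M[C]_d2)
    (Phi : 'M[C]_d1 -> 'M[C]_d2) : Prop :=
  exists Ks : seq 'M[C]_(d2, d1),
    [/\ forall X : 'M[C]_d1, Phi X = \sum_(K <- Ks) K *m X *m hadj K,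
        \sum_(K <- Ks) hadj K *m K = A
      & \sum_(K <- Ks) K *m hadj K = B].

Definition extreme_point (d1 d2 : nat) (S : ('M[C]_d1 -> 'M[C]_d2) -> Prop)
    (Phi : 'M[C]_d1 -> 'M[C]_d2) : Prop :=
  S Phi /\
  forall (Phi1 Phi2 : 'M[C]_d1 -> 'M[C]_d2) (t : C),
    S Phi1 -> S Phi2 -> 0 < t -> t < 1 ->
    (forall X, Phi X = t *: Phi1 X + (1 - t) *: Phi2 X) ->
    Phi1 = Phi /\ Phi2 = Phi.

Definition choi (d1 d2 : nat) (Phi : 'M[C]_d1 -> 'M[C]_d2) : 'M[C]_(d1 * d2) :=
  \sum_(r < d1) \sum_(s < d1) (delta_mx r s *t Phi (delta_mx r s)).

Definition choi_rank (d1 d2 : nat) (Phi : 'M[C]_d1 -> 'M[C]_d2) : nat :=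
  \rank (choi Phi).

(* MR(A,B): maximum Choi rank of an extreme point of CP(M_d1,M_d2;A,B).
   Choi ranks are at most d1*d2, so the maximum ranges over 'I_(d1*d2).+1. *)
Definition MR (d1 d2 : nat) (A : 'M[C]_d1) (B : 'M[C]_d2) : nat :=
  \max_(n < (d1 * d2).+1 |
        `[< exists Phi, extreme_point (CPset A B) Phi /\ choi_rank Phi = n >])
     (n : nat).

Definition Zmx (d m : nat) : 'M[C]_d :=
  let p : C := (d.+1)%:R / (d + m)%:R in
  (p / d%:R) *: (1%:M) + ((1 - p) / d%:R) *: const_mx 1.

Definition maxmixed (n : nat) : 'M[C]_n := (n%:R)^-1 *: 1%:M.

End QChannels.

(* Main.v *)
Require Import Defs.
From HB Require Import structures.
From mathcomp Require Import all_boot all_order all_algebra.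
From mathcomp Require Import complex mxtens.
From mathcomp Require Import boolp reals.
From mathcomp Require Import sesquilinear spectral.
From mathcomp Require Import ring zify.

Set Implicit Arguments.
Unset Strict Implicit.
Unset Printing Implicit Defensive.
Import Order.TTheory GRing.Theory Num.Theory.
Local Open Scope ring_scope.

Section Work.
Variable R : realType.
Local Notation C := (R[i]).

Lemma hadjE m n (A : 'M[C]_(m, n)) i j : hadj A i j = (A j i)^*.
Proof. by rewrite /hadj !mxE. Qed.

Lemma hadj_mul m n p (A : 'M[C]_(m, n)) (B : 'M[C]_(n, p)) :
  hadj (A *m B) = hadj B *m hadj A.
Proof. by rewrite /hadj map_mxM trmx_mul. Qed.

Lemma hadjK m n (A : 'M[C]_(m, n)) : hadj (hadj A) = A.
Proof. by apply/matrixP => i j; rewrite !hadjE conjCK. Qed.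

Lemma hadjD m n (A B : 'M[C]_(m, n)) : hadj (A + B) = hadj A + hadj B.
Proof. by apply/matrixP => i j; rewrite !mxE rmorphD. Qed.

Lemma hadjZ m n a (A : 'M[C]_(m, n)) : hadj (a *: A) = a^* *: hadj A.
Proof. by apply/matrixP => i j; rewrite !mxE rmorphM. Qed.

Lemma hadjN m n (A : 'M[C]_(m, n)) : hadj (- A) = - hadj A.
Proof. by apply/matrixP => i j; rewrite !mxE rmorphN. Qed.

Lemma hadj0 m n : hadj (0 : 'M[C]_(m, n)) = 0.
Proof. by apply/matrixP => i j; rewrite !mxE rmorph0. Qed.

Lemma hadj_sum m n I (r : seq I) (P : pred I) (F : I -> 'M[C]_(m, n)) :
  hadj (\sum_(i <- r | P i) F i) = \sum_(i <- r | P i) hadj (F i).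
Proof. exact: (big_morph (@hadj R m n) (@hadjD m n) (@hadj0 m n)). Qed.

Lemma hadj1 n : hadj (1%:M : 'M[C]_n) = 1%:M.
Proof. by apply/matrixP => i j; rewrite !mxE eq_sym; case: eqP; rewrite /= ?rmorph1 ?rmorph0. Qed.


Lemma mxDE m n (A B : 'M[C]_(m, n)) i j : (A + B) i j = A i j + B i j.
Proof. by rewrite !mxE. Qed.
Lemma mxBE m n (A B : 'M[C]_(m, n)) i j : (A - B) i j = A i j - B i j.
Proof. by rewrite !mxE. Qed.
Lemma mxZE m n a (A : 'M[C]_(m, n)) i j : (a *: A) i j = a * A i j.
Proof. by rewrite !mxE. Qed.

Lemma hadj_delta m n (i : 'I_m) (j : 'I_n) : hadj (delta_mx i j : 'M[C]_(m, n)) = delta_mx j i.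
Proof. by apply/matrixP => a b; rewrite !mxE rmorph_nat andbC. Qed.

Lemma mxE_rowcol m n p (A : 'M[C]_(m, n)) (B : 'M[C]_(n, p)) i j :
  (A *m B) i j = (row i A *m col j B) 0 0.
Proof. by rewrite !mxE; apply: eq_bigr => k _; rewrite !mxE. Qed.

Lemma col_hadj m n (M : 'M[C]_(m, n)) i : col i (hadj M) = hadj (row i M).
Proof. by apply/matrixP => a b; rewrite !mxE. Qed.

Lemma quad_diag m n (M : 'M[C]_(m, n)) X i :
  (M *m X *m hadj M) i i = (row i M *m X *m hadj (row i M)) 0 0.
Proof. by rewrite mxE_rowcol row_mul col_hadj. Qed.

Lemma mx11_hadj (Y : 'M[C]_1) : (Y *m hadj Y) 0 0 = `|Y 0 0| ^+ 2.
Proof. by rewrite mxE big_ord1 hadjE normCK. Qed.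

Lemma quad_rank1 m n (M : 'M[C]_(m, n)) (r : 'rV[C]_n) i :
  (M *m (hadj r *m r) *m hadj M) i i = `|(row i M *m hadj r) 0 0| ^+ 2.
Proof.
rewrite quad_diag.
have -> : row i M *m (hadj r *m r) *m hadj (row i M) =
  (row i M *m hadj r) *m hadj (row i M *m hadj r) by rewrite hadj_mul hadjK !mulmxA.
exact: mx11_hadj.
Qed.

Lemma rV_hadj_eq0 n (v : 'rV[C]_n) : (v *m hadj v) 0 0 = 0 -> v = 0.
Proof.
move=> Hv.
have H : \sum_k `|v 0 k| ^+ 2 = 0.
  by rewrite -[RHS]Hv mxE; apply: eq_bigr => k _; rewrite hadjE normCK.
apply/rowP => k; rewrite mxE.
have := psumr_eq0P (fun i _ => exprn_ge0 2 (normr_ge0 (v 0 i))) H (i := k) isT.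
by move/eqP; rewrite expf_eq0 /= normr_eq0 => /eqP.
Qed.

Lemma delta_mulE m n p (k : 'I_m) (l : 'I_n) (M : 'M[C]_(n, p)) i j :
  (delta_mx k l *m M) i j = (i == k)%:R * M l j.
Proof.
rewrite mxE (bigD1 l) //= big1 ?addr0 => [|l' nl]; first by rewrite mxE eqxx andbT.
by rewrite mxE (negPf nl) andbF mul0r.
Qed.

Lemma mul_deltaE m n p (k : 'I_n) (l : 'I_p) (M : 'M[C]_(m, n)) i j :
  (M *m delta_mx k l) i j = M i k * (j == l)%:R.
Proof.
rewrite mxE (bigD1 k) //= big1 ?addr0 => [|k' nk]; first by rewrite mxE eqxx.
by rewrite mxE (negPf nk) mulr0.
Qed.

Lemma sum_delta_diag n : \sum_(k < n) delta_mx k k = 1%:M :> 'M[C]_n.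
Proof.
apply/matrixP => i j; rewrite summxE (bigD1 i) //= big1 ?addr0 => [|k nk].
  by rewrite !mxE eqxx eq_sym.
by rewrite mxE eq_sym (negPf nk).
Qed.

Lemma hadj_diag n (v : 'rV[C]_n) : hadj (diag_mx v) = diag_mx (map_mx Num.conj v).
Proof.
apply/matrixP => i j; rewrite !mxE eq_sym; case: eqP => [->|_]; first by rewrite !mulr1n.
by rewrite !mulr0n rmorph0.
Qed.

Lemma diag_quad m n (v : 'rV[C]_m) (M : 'M[C]_(m, n)) (N : 'M[C]_(m, n)) i j :
  (diag_mx v *m M *m hadj (diag_mx v *m N)) i j = v 0 i * (M *m hadj N) i j * (v 0 j)^*.
Proof.
rewrite hadj_mul hadj_diag !mulmxA -(mulmxA (diag_mx v)) mul_mx_diag mul_diag_mx !mxE.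
by [].
Qed.

Definition selmx m N (f : 'I_m -> 'I_N) : 'M[C]_(m, N) := \matrix_(i, k) (k == f i)%:R.

Lemma selE m N (f : 'I_m -> 'I_N) (J : 'M[C]_N) i j :
  (selmx f *m J *m (selmx f)^T) i j = J (f i) (f j).
Proof.
rewrite mxE (bigD1 (f j)) //= big1 ?addr0 => [|k nk]; last by rewrite !mxE (negPf nk) mulr0.
rewrite !mxE eqxx mulr1 (bigD1 (f i)) //= big1 ?addr0 => [|k nk]; last by rewrite !mxE (negPf nk) mul0r.
by rewrite mxE eqxx mul1r.
Qed.

Lemma sum_eqE k (F : 'I_k -> C) i : \sum_l (i == l)%:R * F l = F i.
Proof.
rewrite (bigD1 i) //= eqxx mul1r big1 ?addr0 // => l nl.
by rewrite eq_sym (negPf nl) mul0r.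
Qed.

Lemma choiE d1 d2 (Phi : 'M[C]_d1 -> 'M[C]_d2) r i s j :
  choi Phi (mxtens_index (r, i)) (mxtens_index (s, j)) = Phi (delta_mx r s) i j.
Proof.
rewrite /choi summxE; under eq_bigr do rewrite summxE.
under eq_bigr do under eq_bigr do rewrite tensmxE mxE -mulnb natrM -mulrA.
under eq_bigr do rewrite -mulr_sumr sum_eqE.
by rewrite sum_eqE.
Qed.

Section PartA.
Variables (n d : nat) (B : 'M[C]_(n, d)).

Definition Kb (i : 'I_n) : 'M[C]_(n, d) := delta_mx i i *m B.
Definition KsB := [seq Kb i | i <- enum 'I_n].
Definition PhiB (X : 'M[C]_d) : 'M[C]_n := \sum_(K <- KsB) K *m X *m hadj K.

Lemma PhiBE X i j : PhiB X i j = (i == j)%:R * (B *m X *m hadj B) i i.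
Proof.
rewrite /PhiB /KsB big_map big_enum /= summxE.
under eq_bigr => k _ do rewrite /Kb hadj_mul hadj_delta !mulmxA -!(mulmxA (delta_mx k k)) delta_mulE mul_deltaE.
rewrite (bigD1 i) //= big1 ?addr0 => [|k nk]; last by rewrite eq_sym (negPf nk) !mul0r.
by rewrite eqxx mul1r mulrC eq_sym.
Qed.

Lemma PhiB_CP (A : 'M[C]_d) (c : C) : (forall i, (B *m hadj B) i i = c) ->
  hadj B *m B = A -> CPset A (c *: 1%:M) PhiB.
Proof.
move=> Hc HA; exists KsB; split => //.
  rewrite -HA /KsB big_map big_enum /=.
  under eq_bigr => k _ do rewrite /Kb hadj_mul hadj_delta -mulmxA (mulmxA (delta_mx k k)) mul_delta_mx.
  by rewrite -mulmx_sumr -mulmx_suml sum_delta_diag mul1mx.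
have -> : \sum_(K <- KsB) K *m hadj K = PhiB 1%:M.
  by rewrite /PhiB; apply: eq_bigr => K _; rewrite mulmx1.
apply/matrixP => i j; rewrite PhiBE mulmx1 Hc !mxE.
by rewrite mulrC mulr_natr.
Qed.


Lemma PhiB_dom (c : C) (A A' : 'M[C]_d) (Bo' : 'M[C]_n) (Phi1 Phi2 : 'M[C]_d -> 'M[C]_n) (t : C) :
  c != 0 -> (forall i, (B *m hadj B) i i = c) ->
  (forall i j, (B *m hadj B) i j != 0) ->
  CPset A (c *: 1%:M) Phi1 -> CPset A' Bo' Phi2 -> 0 < t -> 0 < 1 - t ->
  (forall X, PhiB X = t *: Phi1 X + (1 - t) *: Phi2 X) -> Phi1 = PhiB.
Proof.
move=> c0 Hc Hnz [Ls [HL1 _ HL3]] [Ms [HM1 _ _]] t0 t1 Hmix.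
have Lrow : forall L, L \in Ls -> forall i,
    row i L = ((row i L *m hadj (row i B)) 0 0 / c) *: row i B.
  move=> L LLs i.
  set a := (_ / c).
  set rr := row i L - a *: row i B.
  have bb : (row i B *m hadj (row i B)) 0 0 = c.
    by have := quad_diag B 1%:M i; rewrite !mulmx1 Hc => ->.
  have rb : (rr *m hadj (row i B)) 0 0 = 0.
    by rewrite /rr mulmxBl -scalemxAl mxBE mxZE bb divfK // subrr.
  have Bz : (row i B *m hadj rr) 0 0 = 0.
    have -> : row i B *m hadj rr = hadj (rr *m hadj (row i B)) by rewrite hadj_mul hadjK.
    by rewrite hadjE rb conjC0.
  have S1 : Phi1 (hadj rr *m rr) i i = \sum_(K <- Ls) `|(row i K *m hadj rr) 0 0| ^+ 2.
    by rewrite HL1 summxE; apply: eq_bigr => K _; rewrite quad_rank1.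
  have S2 : Phi2 (hadj rr *m rr) i i = \sum_(K <- Ms) `|(row i K *m hadj rr) 0 0| ^+ 2.
    by rewrite HM1 summxE; apply: eq_bigr => K _; rewrite quad_rank1.
  have H0 := congr1 (fun M : 'M[C]_n => M i i) (Hmix (hadj rr *m rr)).
  rewrite /= PhiBE eqxx mul1r quad_rank1 Bz normr0 expr0n /= mxDE !mxZE S1 S2 in H0.
  move: H0 => /esym/eqP; rewrite paddr_eq0 => [/andP[H1 _]||]; first last.
  - by apply: mulr_ge0; [exact: ltW| apply: sumr_ge0 => K _; exact: exprn_ge0].
  - by apply: mulr_ge0; [exact: ltW| apply: sumr_ge0 => K _; exact: exprn_ge0].
  move: H1; rewrite mulf_eq0 (gt_eqF t0) /= psumr_eq0 => [/allP/(_ L LLs)/= Lz|K _]; last exact: exprn_ge0.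
  move: Lz; rewrite expf_eq0 /= normr_eq0 => /eqP Lz.
  have E1 : row i L = rr + a *: row i B by rewrite /rr subrK.
  rewrite E1 mulmxDl -scalemxAl mxDE mxZE Bz mulr0 addr0 in Lz.
  by rewrite E1 (rV_hadj_eq0 Lz) add0r.
pose cv (L : 'M[C]_(n, d)) := \row_i ((row i L *m hadj (row i B)) 0 0 / c).
have Lform : forall L, L \in Ls -> L = diag_mx (cv L) *m B.
  move=> L LLs; apply/matrixP => i j; rewrite mul_diag_mx mxE.
  have -> : L i j = row i L 0 j by rewrite mxE.
  by rewrite (Lrow L LLs i) mxZE [row i B 0 j]mxE [cv L 0 i]mxE.
have HS : forall i j, \sum_(L <- Ls) cv L 0 i * (cv L 0 j)^* = (i == j)%:R.
  move=> i j.
  have E := congr1 (fun M : 'M[C]_n => M i j) HL3; simpl in E.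
  rewrite summxE mxZE mxE in E.
  have E2 : \sum_(L <- Ls) (L *m hadj L) i j =
      (\sum_(L <- Ls) cv L 0 i * (cv L 0 j)^* ) * (B *m hadj B) i j.
    rewrite mulr_suml; apply: eq_big_seq => L LLs.
    have -> : L *m hadj L = diag_mx (cv L) *m B *m hadj (diag_mx (cv L) *m B).
      by rewrite -Lform.
    by rewrite diag_quad mulrAC.
  rewrite E2 in E.
  case: (eqVneq i j) E => [<-|nij] E.
    rewrite Hc mulr1 in E; apply: (mulIf c0); by rewrite E mul1r.
  move: E; rewrite mulr0 => /eqP; rewrite mulf_eq0 (negPf (Hnz i j)) orbF.
  by move/eqP.
apply: funext => X; apply/matrixP => i j; rewrite PhiBE HL1 summxE.
transitivity (\sum_(L <- Ls) cv L 0 i * (cv L 0 j)^* * (B *m X *m hadj B) i j).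
  apply: eq_big_seq => L LLs.
  have -> : L *m X *m hadj L = diag_mx (cv L) *m (B *m X) *m hadj (diag_mx (cv L) *m B).
    by rewrite mulmxA -Lform.
  by rewrite diag_quad mulrAC.
rewrite -mulr_suml HS; case: eqVneq => [<-|_]; by rewrite ?mul0r.
Qed.

Lemma PhiB_extreme (c : C) (A : 'M[C]_d) : c != 0 ->
  (forall i, (B *m hadj B) i i = c) -> (forall i j, (B *m hadj B) i j != 0) ->
  hadj B *m B = A -> extreme_point (CPset A (c *: 1%:M)) PhiB.
Proof.
move=> c0 Hc Hnz HA; split; first exact: PhiB_CP.
move=> P1 P2 t HP1 HP2 t0 t1 Hmix; split.
  by apply: (PhiB_dom c0 Hc Hnz HP1 HP2 t0 _ Hmix); rewrite subr_gt0.
apply: (PhiB_dom c0 Hc Hnz HP2 HP1 (t := 1 - t)).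
- by rewrite subr_gt0.
- by rewrite subKr.
- by move=> X; rewrite subKr addrC Hmix.
Qed.

Lemma PhiB_rank (r0 : 'I_d) : (forall i, B i r0 != 0) -> (n <= choi_rank PhiB)%N.
Proof.
move=> Hnz; rewrite /choi_rank.
pose f := fun i : 'I_n => mxtens_index (r0, i).
have E : selmx f *m choi PhiB *m (selmx f)^T = diag_mx (\row_i (B i r0 * (B i r0)^* )).
  apply/matrixP => i j; rewrite selE /f choiE PhiBE [(B *m _ *m _) i i]mxE.
  rewrite (bigD1 r0) //= big1 ?addr0 => [|k nk]; last by rewrite mul_deltaE (negPf nk) mulr0 mul0r.
  by rewrite mul_deltaE eqxx mulr1 hadjE !mxE mulr_natl.
have U : diag_mx (\row_i (B i r0 * (B i r0)^* )) \in unitmx.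
  rewrite unitmxE det_diag unitfE; apply/prodf_neq0 => i _.
  by rewrite mxE mulf_neq0 // conjC_eq0.
apply: (leq_trans (eq_leq (esym (mxrank_unit U)))); rewrite -E; apply: leq_trans (mxrankM_maxl _ _) _; exact: mxrankM_maxr.
Qed.
End PartA.


Section Construct.
Variables (d m : nat).
Hypothesis hd : (0 < d)%N.
Hypothesis hm : (0 < m)%N.

Definition ss : C := sqrtC ((d * (d + m))%:R)^-1.
Definition tt : C := sqrtC (d.+1)%:R.
Definition uu : C := (1 - tt) / d%:R.
Definition gfun (i : 'I_(d + m)) (c : 'I_d) : C :=
  match split i with inl a => uu + tt * (c == a)%:R | inr _ => 1 end.
Definition Bx : 'M[C]_(d + m, d) := \matrix_(i, c) (ss * gfun i c).

Lemma ordsplitP (i : 'I_(d + m)) : (exists a, i = lshift m a) \/ (exists b, i = rshift d b).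
Proof. by rewrite -(splitK i); case: (split i) => [a|b]; [left; exists a | right; exists b]. Qed.

Lemma gfun_l a c : gfun (lshift m a) c = uu + tt * (c == a)%:R.
Proof. by rewrite /gfun -[lshift m a]/(unsplit (inl a)) unsplitK. Qed.

Lemma gfun_r b c : gfun (rshift d b) c = 1.
Proof. by rewrite /gfun -[rshift d b]/(unsplit (inr b)) unsplitK. Qed.

Lemma ss_ge0 : 0 <= ss.
Proof. by rewrite sqrtC_ge0 invr_ge0 ler0n. Qed.
Lemma tt_ge0 : 0 <= tt.
Proof. by rewrite sqrtC_ge0 ler0n. Qed.
Lemma ss2 : ss ^+ 2 = ((d * (d + m))%:R)^-1.
Proof. exact: sqrtCK. Qed.
Lemma tt2 : tt ^+ 2 = (d.+1)%:R.
Proof. exact: sqrtCK. Qed.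

Lemma gfun_real i c : gfun i c \is Num.real.
Proof.
have uur : uu \is Num.real by rewrite rpredM ?rpredB ?rpredV ?rpred1 ?realn ?ger0_real ?tt_ge0.
case: (ordsplitP i) => [[a ->]|[b ->]]; rewrite ?gfun_l ?gfun_r ?rpred1 //.
by apply: rpredD => //; apply: rpredM; rewrite ?realn ?ger0_real ?tt_ge0.
Qed.

Lemma hadj_Bx : hadj Bx = Bx^T.
Proof.
apply/matrixP => c i; rewrite hadjE !mxE conj_Creal //.
by rewrite rpredM ?gfun_real ?ger0_real ?ss_ge0.
Qed.

Lemma d0 : d%:R != 0 :> C.
Proof. by rewrite pnatr_eq0 -lt0n. Qed.

Lemma uu_id : d%:R * uu ^+ 2 + 2%:R * tt * uu = -1.
Proof.
have d0' := d0.
have -> : d%:R * uu ^+ 2 + 2%:R * tt * uu = (1 - tt ^+ 2) / d%:R by rewrite /uu; field.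
by rewrite tt2 -addn1 natrD; field.
Qed.

Lemma uu_id2 : d%:R * uu + tt = 1.
Proof. have d0' := d0. by rewrite /uu; field. Qed.


Lemma gfun_l' a c : gfun (lshift m a) c = uu + tt * (a == c)%:R.
Proof. by rewrite gfun_l eq_sym. Qed.

Lemma BBh i j : (Bx *m hadj Bx) i j = ss ^+ 2 * \sum_c gfun i c * gfun j c.
Proof.
rewrite hadj_Bx mxE mulr_sumr; apply: eq_bigr => c _.
by rewrite !mxE mulrACA expr2.
Qed.

Lemma prod_expand (x y : C) : (uu + tt * x) * (uu + tt * y) =
  uu ^+ 2 + x * (tt * uu) + y * (tt * uu) + x * (y * tt ^+ 2).
Proof. by ring. Qed.

Lemma Gll a b : \sum_c gfun (lshift m a) c * gfun (lshift m b) c = tt ^+ 2 * (a == b)%:R - 1.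
Proof.
under eq_bigr do rewrite !gfun_l' prod_expand.
rewrite !big_split /= !sum_eqE sumr_const card_ord -mulr_natl -uu_id eq_sym.
by ring.
Qed.

Lemma Glr a b : \sum_c gfun (lshift m a) c * gfun (rshift d b) c = 1.
Proof.
under eq_bigr do rewrite gfun_l' gfun_r mulr1.
rewrite big_split /= sumr_const card_ord -mulr_natl.
under eq_bigr do rewrite mulrC.
by rewrite (sum_eqE (fun _ => tt)) uu_id2.
Qed.

Lemma Grl a b : \sum_c gfun (rshift d b) c * gfun (lshift m a) c = 1.
Proof. by rewrite -(Glr a b); apply: eq_bigr => c _; rewrite mulrC. Qed.

Lemma Grr a b : \sum_c gfun (rshift d a) c * gfun (rshift d b) c = d%:R.
Proof. by under eq_bigr do rewrite !gfun_r mulr1; rewrite sumr_const card_ord. Qed.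

Lemma dm0 : d%:R + m%:R != 0 :> C.
Proof. by rewrite -natrD pnatr_eq0 addn_eq0 negb_and -!lt0n hd. Qed.

Lemma ss2_neq0 : ss ^+ 2 != 0.
Proof. by rewrite ss2 invr_eq0 pnatr_eq0 muln_eq0 negb_or -!lt0n hd /= addn_gt0 hd. Qed.

Lemma Bx_diag i : (Bx *m hadj Bx) i i = ((d + m)%:R)^-1.
Proof.
have d0' := d0; have dm0' := dm0.
rewrite BBh ss2; case: (ordsplitP i) => [[a ->]|[b ->]].
  rewrite Gll eqxx mulr1 tt2 -addn1 natrD addrK natrM.
  by field; rewrite dm0' d0'.
by rewrite (Grr b b) natrM natrD; field; rewrite dm0' d0'.
Qed.

Lemma Bx_nz i j : (Bx *m hadj Bx) i j != 0.
Proof.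
have d0' := d0.
rewrite BBh mulf_neq0 ?ss2_neq0 //.
case: (ordsplitP i) => [[a ->]|[b ->]]; case: (ordsplitP j) => [[a' ->]|[b' ->]];
  rewrite ?Gll ?Glr ?Grl ?Grr ?oner_neq0 ?d0' //.
case: (eqVneq a a') => _ /=.
  by rewrite mulr1n mulr1 tt2 -addn1 natrD addrK.
by rewrite mulr0n mulr0 sub0r oppr_eq0 oner_eq0.
Qed.

Lemma Bx_Z : hadj Bx *m Bx = Zmx R d m.
Proof.
have d0' := d0; have dm0' := dm0.
apply/matrixP => c c'; rewrite hadj_Bx mxE.
rewrite big_split_ord /=.
have -> : \sum_(a < d) Bx^T c (lshift m a) * Bx (lshift m a) c' =
    ss ^+ 2 * (tt ^+ 2 * (c' == c)%:R - 1).
  under eq_bigr do rewrite !mxE !gfun_l mulrACA -expr2 prod_expand.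
  rewrite -mulr_sumr !big_split /= !sum_eqE sumr_const card_ord -mulr_natl -uu_id.
  by congr (_ * _); ring.
have -> : \sum_(b < m) Bx^T c (rshift d b) * Bx (rshift d b) c' = ss ^+ 2 * m%:R.
  under eq_bigr do rewrite !mxE !gfun_r !mulr1 -expr2.
  by rewrite sumr_const card_ord mulr_natr.
rewrite /Zmx !mxE ss2 tt2 eq_sym.
case: eqP => _; rewrite ?mulr1n ?mulr0n ?mulr1 ?mulr0 ?addr0 ?add0r.
  by rewrite -natr1 !natrD natrM; field; rewrite d0' dm0'.
by rewrite -natr1 !natrD natrM; field; rewrite d0' dm0'.
Qed.

Lemma Bx_r0_nz i : Bx i (Ordinal hd) != 0.
Proof.
have d0' := d0.
have ss0 : ss != 0 by apply: contra ss2_neq0 => /eqP ->; rewrite expr0n.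
rewrite mxE mulf_neq0 //.
case: (ordsplitP i) => [[a ->]|[b ->]]; rewrite ?gfun_r ?oner_neq0 //.
rewrite gfun_l'; case: (eqVneq a (Ordinal hd)) => _ /=; rewrite ?mulr1n ?mulr0n.
  have -> : uu + tt * 1 = (1 + (d.-1)%:R * tt) / d%:R.
    have dm1 : (d.-1)%:R = d%:R - 1 :> C by rewrite -{2}(prednK hd) -natr1 addrK.
    by rewrite dm1 /uu; field.
  rewrite mulf_neq0 ?invr_eq0 // gt_eqF //.
  apply: (lt_le_trans ltr01); rewrite lerDl mulr_ge0 ?ler0n ?tt_ge0 //.
rewrite mulr0 addr0 /uu mulf_neq0 ?invr_eq0 // subr_eq0.
apply/eqP => t1; have := tt2; rewrite -t1 expr1n => H.
have : (d%:R : C) = 0 by apply: (addIr 1); rewrite add0r natr1 -H.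
by move/eqP; rewrite (negPf d0').
Qed.
End Construct.



Lemma lin1_mxE' p q (f : 'rV[C]_p -> 'rV[C]_q) :
  (forall a u v, f (a *: u + v) = a *: f u + f v) -> forall u, u *m lin1_mx f = f u.
Proof.
move=> fL u.
have f0 : f 0 = 0.
  have H := fL 1 0 0; rewrite !scale1r !addr0 in H.
  by have := congr1 (fun x => x - f 0) H; rewrite subrr addrK => <-.
have fZ : forall a v, f (a *: v) = a *: f v.
  by move=> a v; rewrite -[a *: v]addr0 fL f0 addr0.
have fD : forall u v, f (u + v) = f u + f v.
  by move=> u' v; have := fL 1 u' v; rewrite !scale1r.
have fS : forall (F : 'I_p -> 'rV_p), f (\sum_i F i) = \sum_i f (F i).
  by move=> F; elim/big_rec2: _ => [|i y1 y2 _ <-]; [exact: f0 | exact: fD].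
apply/rowP => j; rewrite [in RHS](row_sum_delta u) fS summxE mxE.
by apply: eq_bigr => i _; rewrite fZ mxZE /lin1_mx mxE.
Qed.

Lemma kernel_exists p q (f : 'rV[C]_p -> 'rV[C]_q) (w : 'cV[C]_q) :
  (forall a u v, f (a *: u + v) = a *: f u + f v) -> w != 0 ->
  (forall u, f u *m w = 0) -> (q <= p)%N -> exists2 u, u != 0 & f u = 0.
Proof.
move=> fL w0 fw qp.
pose Fm := lin1_mx f.
have Fw : Fm *m w = 0.
  apply/row_matrixP => i; rewrite row_mul rowE (lin1_mxE' fL) row0; exact: fw.
have rk : (\rank Fm < q)%N.
  have : (w^T <= kermx Fm^T)%MS by apply/sub_kermxP; rewrite -trmx_mul Fw trmx0.
  move/mxrankS; rewrite mxrank_ker !mxrank_tr.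
  have : (0 < \rank w)%N by rewrite lt0n mxrank_eq0.
  move=> h1 h2; have := leq_trans h1 h2; rewrite subn_gt0; exact.
have : kermx Fm != 0.
  rewrite -mxrank_eq0 mxrank_ker -lt0n subn_gt0.
  exact: leq_trans rk qp.
case/rowV0Pn => v /sub_kermxP vF v0; exists v => //.
by rewrite -(lin1_mxE' fL).
Qed.

Definition trv n : 'cV[C]_(n * n) := lin1_mx (fun v : 'rV[C]_(n * n) => (\tr (vec_mx v))%:M).

Lemma trv_lin n : forall a (u v : 'rV[C]_(n * n)),
  (\tr (vec_mx (a *: u + v)))%:M = a *: (\tr (vec_mx u))%:M + (\tr (vec_mx v))%:M :> 'M[C]_1.
Proof.
move=> a u v; rewrite linearP /= mxtraceD mxtraceZ.
by apply/matrixP => i j; rewrite !mxE mulrnDl mulrnAr.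
Qed.

Lemma trvE n (X : 'M[C]_n) : mxvec X *m trv n = (\tr X)%:M.
Proof. by rewrite /trv (lin1_mxE' (@trv_lin n)) mxvecK. Qed.

Lemma trv_neq0 n : (0 < n)%N -> trv n != 0.
Proof.
move=> n0; apply/eqP => h; have := trvE (1%:M : 'M[C]_n); rewrite h mulmx0 mxtrace1.
move/matrixP/(_ 0 0); rewrite !mxE /= mulr1n => /eqP; rewrite eq_sym pnatr_eq0 => /eqP n00; by move: n0; rewrite n00.
Qed.

Section PartB.
Variables (d1 d2 : nat) (Ks : seq 'M[C]_(d2, d1)).
Local Notation N := (size Ks).
Definition Kk (k : 'I_N) : 'M[C]_(d2, d1) := Ks`_k.

Definition PhiM (M : 'M[C]_N) (X : 'M[C]_d1) : 'M[C]_d2 :=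
  \sum_k \sum_l M k l *: (Kk k *m X *m hadj (Kk l)).
Definition QcM (M : 'M[C]_N) : 'M[C]_d1 :=
  \sum_k \sum_l M l k *: (hadj (Kk k) *m Kk l).

Lemma sumKs_nth p q (F : 'M[C]_(d2, d1) -> 'M[C]_(p, q)) :
  \sum_(K <- Ks) F K = \sum_(k < N) F (Kk k).
Proof. by rewrite (big_nth 0) big_mkord. Qed.

Lemma PhiM1 X : PhiM 1%:M X = \sum_(K <- Ks) K *m X *m hadj K.
Proof.
rewrite sumKs_nth; apply: eq_bigr => k _.
rewrite (bigD1 k) //= big1 ?addr0 => [|l nl]; first by rewrite mxE eqxx scale1r.
by rewrite mxE eq_sym (negPf nl) scale0r.
Qed.

Lemma QcM1 : QcM 1%:M = \sum_(K <- Ks) hadj K *m K.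
Proof.
rewrite sumKs_nth; apply: eq_bigr => k _.
rewrite (bigD1 k) //= big1 ?addr0 => [|l nl]; first by rewrite mxE eqxx scale1r.
by rewrite mxE (negPf nl) scale0r.
Qed.

Lemma PhiMD M1 M2 X : PhiM (M1 + M2) X = PhiM M1 X + PhiM M2 X.
Proof.
rewrite /PhiM -big_split; apply: eq_bigr => k _; rewrite -big_split.
by apply: eq_bigr => l _; rewrite mxE scalerDl.
Qed.

Lemma PhiMZ a M X : PhiM (a *: M) X = a *: PhiM M X.
Proof.
rewrite /PhiM scaler_sumr; apply: eq_bigr => k _; rewrite scaler_sumr.
by apply: eq_bigr => l _; rewrite mxE scalerA.
Qed.

Lemma QcMD M1 M2 : QcM (M1 + M2) = QcM M1 + QcM M2.
Proof.
rewrite /QcM -big_split; apply: eq_bigr => k _; rewrite -big_split.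
by apply: eq_bigr => l _; rewrite mxE scalerDl.
Qed.

Lemma QcMZ a M : QcM (a *: M) = a *: QcM M.
Proof.
rewrite /QcM scaler_sumr; apply: eq_bigr => k _; rewrite scaler_sumr.
by apply: eq_bigr => l _; rewrite mxE scalerA.
Qed.

Definition mixK (G : 'M[C]_N) (a : 'I_N) : 'M[C]_(d2, d1) := \sum_k G a k *: Kk k.
Definition mixKs G := [seq mixK G a | a <- enum 'I_N].
Definition Gram (G : 'M[C]_N) : 'M[C]_N := G^T *m map_mx Num.conj G.

Lemma bilin (c e : 'I_N -> C) X :
  (\sum_k c k *: Kk k) *m X *m hadj (\sum_l e l *: Kk l) =
  \sum_k \sum_l (c k * (e l)^*) *: (Kk k *m X *m hadj (Kk l)).
Proof.
rewrite hadj_sum !mulmx_suml; apply: eq_bigr => k _; rewrite mulmx_sumr.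
by apply: eq_bigr => l _; rewrite hadjZ -scalemxAl -scalemxAl -scalemxAr scalerA.
Qed.

Lemma mix_Phi G X : \sum_(L <- mixKs G) L *m X *m hadj L = PhiM (Gram G) X.
Proof.
rewrite /PhiM /mixKs big_map big_enum /=.
under eq_bigr => a _ do rewrite /mixK bilin.
rewrite exchange_big; apply: eq_bigr => k _; rewrite exchange_big; apply: eq_bigr => l _.
by rewrite mxE scaler_suml; apply: eq_bigr => a _; rewrite !mxE.
Qed.

Lemma bilin2 (c e : 'I_N -> C) :
  hadj (\sum_k c k *: Kk k) *m (\sum_l e l *: Kk l) =
  \sum_k \sum_l ((c k)^* * e l) *: (hadj (Kk k) *m Kk l).
Proof.
rewrite hadj_sum !mulmx_suml; apply: eq_bigr => k _; rewrite mulmx_sumr.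
by apply: eq_bigr => l _; rewrite hadjZ -scalemxAl -scalemxAr scalerA.
Qed.

Lemma mix_Qc G : \sum_(L <- mixKs G) hadj L *m L = QcM (Gram G).
Proof.
rewrite /QcM /mixKs big_map big_enum /=.
under eq_bigr => a _ do rewrite /mixK bilin2.
rewrite exchange_big; apply: eq_bigr => k _; rewrite exchange_big; apply: eq_bigr => l _.
by rewrite mxE scaler_suml; apply: eq_bigr => a _; rewrite !mxE mulrC.
Qed.

Definition Vm : 'M[C]_(N, d1 * d2) :=
  \matrix_(k, p) Kk k (mxtens_unindex p).2 (mxtens_unindex p).1.

Lemma KEK k l r s i j :
  (Kk k *m delta_mx r s *m hadj (Kk l)) i j = Kk k i r * (Kk l j s)^*.
Proof.
rewrite mxE (bigD1 s) //= big1 ?addr0 => [|b nb]; last by rewrite mul_deltaE (negPf nb) mulr0 mul0r.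
by rewrite mul_deltaE eqxx mulr1 hadjE.
Qed.

Lemma choi_PhiM M : choi (PhiM M) = Vm^T *m M *m map_mx Num.conj Vm.
Proof.
apply/matrixP => p q; case: p / (mxtens_indexP p) => r i; case: q / (mxtens_indexP q) => s j.
rewrite choiE /PhiM summxE mxE.
under [RHS]eq_bigr do rewrite mxE mulr_suml.
rewrite exchange_big; apply: eq_bigr => k _; rewrite summxE; apply: eq_bigr => l _.
rewrite mxZE KEK !mxE !mxtens_indexK /=.
by rewrite mulrCA mulrA.
Qed.


Lemma PhiM_hadj H : PhiM (hadj H) 1%:M = hadj (PhiM H 1%:M).
Proof.
rewrite /PhiM hadj_sum exchange_big; apply: eq_bigr => k _; rewrite hadj_sum.
apply: eq_bigr => l _; rewrite hadjZ !mulmx1 hadj_mul hadjK hadjE.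
by [].
Qed.

Lemma QcM_hadj H : QcM (hadj H) = hadj (QcM H).
Proof.
rewrite /QcM hadj_sum exchange_big; apply: eq_bigr => k _; rewrite hadj_sum.
apply: eq_bigr => l _; rewrite hadjZ hadj_mul hadjK hadjE.
by [].
Qed.

Lemma trace_PQ H : \tr (QcM H) = \tr (PhiM H 1%:M).
Proof.
have trS : forall n (I : Type) (r : seq I) (F : I -> 'M[C]_n),
    \tr (\sum_(i <- r) F i) = \sum_(i <- r) \tr (F i).
  by move=> n I r F; apply: (big_morph _ (@mxtraceD _ n) (@mxtrace0 _ n)).
rewrite /QcM /PhiM !trS.
under eq_bigr do rewrite trS.
under [RHS]eq_bigr do rewrite trS.
rewrite exchange_big; apply: eq_bigr => k _; apply: eq_bigr => l _.
by rewrite !mxtraceZ mulmx1 mxtrace_mulC.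
Qed.

Definition Tm (H : 'M[C]_N) : 'M[C]_(d1 * d2) := Vm^T *m H *m map_mx Num.conj Vm.

Lemma TmD H1 H2 : Tm (H1 + H2) = Tm H1 + Tm H2.
Proof. by rewrite /Tm mulmxDr mulmxDl. Qed.

Lemma TmZ a H : Tm (a *: H) = a *: Tm H.
Proof. by rewrite /Tm -scalemxAr -scalemxAl. Qed.

Lemma Tm_hadj H : Tm (hadj H) = hadj (Tm H).
Proof.
rewrite /Tm !hadj_mul mulmxA.
have -> : hadj (map_mx Num.conj Vm) = Vm^T.
  by apply/matrixP => i j; rewrite hadjE !mxE conjCK.
have -> : hadj (Vm^T) = map_mx Num.conj Vm.
  by apply/matrixP => i j; rewrite hadjE !mxE.
by [].
Qed.

Lemma perturb (A : 'M[C]_d1) (Bo : 'M[C]_d2) (Phi : 'M[C]_d1 -> 'M[C]_d2) (H : 'M[C]_N) :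
  extreme_point (CPset A Bo) Phi -> (forall X, Phi X = PhiM 1%:M X) ->
  QcM 1%:M = A -> PhiM 1%:M 1%:M = Bo ->
  hadj H = H -> PhiM H 1%:M = 0 -> QcM H = 0 -> forall X, PhiM H X = 0.
Proof.
move=> [_ ext] HPhi HA HB HH HP HQ.
have Hh : H \is hermsymmx.
  by apply/is_hermitianmxP; rewrite expr0 scale1r -[in LHS]HH /hadj map_trmx.
have /orthomx_spectralP HU := hermitian_normalmx Hh.
set U := spectralmx H in HU; set D := spectral_diag H in HU.
have Uu : U \is unitarymx := spectral_unitarymx H.
have Uinv : invmx U = hadj U by rewrite invmx_unitary // /hadj map_trmx.
have UhU : hadj U *m U = 1%:M by rewrite -Uinv (mulVmx (unitarymx_unit Uu)).
have Dr : forall i, D 0 i \is Num.real.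
  by move=> i; have /mxOverP := hermitian_spectral_diag_real Hh; apply.
set mu := 1 + \sum_i `|D 0 i|.
have mu_gt0 : 0 < mu.
  apply: (lt_le_trans ltr01); rewrite lerDl sumr_ge0 // => i _; exact: normr_ge0.
set eps := mu^-1.
have eps_gt0 : 0 < eps by rewrite invr_gt0.
have eps0 : eps != 0 by rewrite gt_eqF.
have Dle : forall i, `|D 0 i| <= mu.
  move=> i; rewrite /mu (bigD1 i) //= -subr_ge0.
  have -> : 1 + (`|D 0 i| + \sum_(j < N | j != i) `|D 0 j|) - `|D 0 i| =
            1 + \sum_(j < N | j != i) `|D 0 j| by ring.
  by rewrite addr_ge0 ?ler01 // sumr_ge0 // => j _; exact: normr_ge0.
have xpos : forall (c : C) i, c \is Num.real -> `|c| = eps -> 0 <= 1 + c * D 0 i.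
  move=> c i cr nc.
  have r : c * D 0 i \is Num.real by apply: rpredM.
  have : `|c * D 0 i| <= 1.
    rewrite normrM nc -(mulVf (negbT (gt_eqF mu_gt0))); apply: ler_wpM2l; [exact: ltW | exact: Dle].
  rewrite real_ler_norml // => /andP[h _].
  by rewrite -subr_ge0 opprK addrC in h.
pose G (c : C) := map_mx Num.conj (diag_mx (\row_i sqrtC (1 + c * D 0 i)) *m U).
have Gram_G : forall c, c \is Num.real -> `|c| = eps -> Gram (G c) = 1%:M + c *: H.
  move=> c cr nc; rewrite /Gram /G.
  set M := diag_mx _ *m U.
  have -> : (map_mx Num.conj M)^T = hadj M by [].
  have -> : map_mx Num.conj (map_mx Num.conj M) = M.
    by apply/matrixP => i j; rewrite !mxE conjCK.
  rewrite /M hadj_mul hadj_diag mulmxA -(mulmxA (hadj U)).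
  have -> : diag_mx (map_mx Num.conj (\row_i sqrtC (1 + c * D 0 i))) *m
            diag_mx (\row_i sqrtC (1 + c * D 0 i)) = 1%:M + c *: diag_mx D.
    apply/matrixP => i j; rewrite mul_diag_mx !mxE.
    case: (i =P j) => _ /=; last by rewrite !mulr0n mulr0 add0r mulr0.
    rewrite !mulr1n -normCKC ger0_norm ?sqrtC_ge0 ?xpos //.
    by rewrite sqrtCK.
  rewrite mulmxDr mulmxDl mulmx1 UhU -scalemxAr -scalemxAl -Uinv -HU.
  by [].
have CPc : forall c, c \is Num.real -> `|c| = eps -> CPset A Bo (PhiM (1%:M + c *: H)).
  move=> c cr nc; exists (mixKs (G c)); split.
  - by move=> X; rewrite mix_Phi Gram_G.
  - by rewrite mix_Qc Gram_G // QcMD QcMZ HQ scaler0 addr0.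
  - have -> : \sum_(L <- mixKs (G c)) L *m hadj L =
              \sum_(L <- mixKs (G c)) L *m 1%:M *m hadj L.
      by apply: eq_bigr => L _; rewrite mulmx1.
    by rewrite mix_Phi Gram_G // PhiMD PhiMZ HP scaler0 addr0.
have epsr : eps \is Num.real by rewrite ger0_real ?ltW.
have neps : `|eps| = eps by rewrite ger0_norm ?ltW.
have epsr' : - eps \is Num.real by rewrite rpredN.
have h20 : 2%:R != 0 :> C by rewrite pnatr_eq0.
have t0 : 0 < (2%:R^-1 : C) by rewrite invr_gt0 ltr0n.
have t1 : (2%:R^-1 : C) < 1 by rewrite invf_lt1 ?ltr0n // ltr1n.
have mix : forall X, Phi X = 2%:R^-1 *: PhiM (1%:M + eps *: H) X +
                     (1 - 2%:R^-1) *: PhiM (1%:M + (- eps) *: H) X.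
  move=> X; rewrite HPhi !PhiMD !PhiMZ.
  have h2 : 1 - 2%:R^-1 = 2%:R^-1 :> C by field.
  rewrite h2 -scalerDr addrACA scaleNr subrr addr0.
  by rewrite -mulr2n -[PhiM 1%:M X *+ 2]scaler_nat scalerA mulVf // scale1r.
have [E1 _] := ext _ _ _ (CPc eps epsr neps) (CPc (- eps) epsr' (etrans (normrN _) neps)) t0 t1 mix.
move=> X; have E := congr1 (fun f => f X) E1; simpl in E.
rewrite HPhi PhiMD PhiMZ in E.
have : eps *: PhiM H X = 0 by apply: (addrI (PhiM 1%:M X)); rewrite addr0 E.
by move/eqP; rewrite scaler_eq0 (negPf eps0) /= => /eqP.
Qed.
End PartB.
Arguments PhiM {d1 d2} Ks M X.
Arguments QcM {d1 d2} Ks M.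
Arguments Tm {d1 d2} Ks H.


Lemma LS_bound d1 d2 (A : 'M[C]_d1) (Bo : 'M[C]_d2) Phi :
  (0 < d1)%N -> extreme_point (CPset A Bo) Phi ->
  (choi_rank Phi * choi_rank Phi < d1 * d1 + d2 * d2)%N.
Proof.
move=> d1pos ext.
have [[Ks [HK1 HKA HKB]] _] := ext.
rewrite ltnNge; apply/negP => Hr.
have HPhi : forall X, Phi X = PhiM Ks 1%:M X by move=> X; rewrite HK1 PhiM1.
have HA : QcM Ks 1%:M = A by rewrite QcM1.
have HB : PhiM Ks 1%:M 1%:M = Bo.
  by rewrite PhiM1 -HKB; apply: eq_bigr => K _; rewrite mulmx1.
have Phi_eq : Phi = PhiM Ks 1%:M := funext HPhi.
move: Hr; rewrite /choi_rank.
set J := choi Phi => Hr.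
have HJ : J = (Vm Ks)^T *m map_mx Num.conj (Vm Ks) by rewrite /J Phi_eq choi_PhiM mulmx1.
set P := col_base J; set Q := row_base J.
have /row_fullP [P' P'P] := col_base_full J.
have /row_freeP [Q' QQ'] := row_base_free J.
have JPQ : J = P *m Q := esym (mulmx_base J).
move: P'P QQ'; rewrite -/P -/Q => P'P QQ'.
clearbody P Q.
have JQ' : J *m Q' = P.
  have E := congr1 (mulmx^~ Q') JPQ; simpl in E.
  by rewrite -mulmxA QQ' mulmx1 in E.
have P'J : P' *m J = Q.
  have E := congr1 (mulmx P') JPQ; simpl in E.
  by rewrite mulmxA P'P mul1mx in E.
pose Hmap (W : 'M[C]_(\rank J)) := map_mx Num.conj (Vm Ks) *m Q' *m W *m P' *m (Vm Ks)^T.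
have key1 : forall W, Tm Ks (Hmap W) = P *m W *m Q.
  move=> W; rewrite /Tm /Hmap !mulmxA -(mulmxA _ (Vm Ks)^T) -!HJ JQ'.
  by rewrite -(mulmxA _ P' J) P'J.
have key2 : forall W, P' *m (P *m W *m Q) *m Q' = W.
  by move=> W; rewrite !mulmxA P'P mul1mx -mulmxA QQ' mulmx1.
pose f (u : 'rV[C]_(\rank J * \rank J)) : 'rV[C]_(d1 * d1 + d2 * d2) :=
  row_mx (mxvec (QcM Ks (Hmap (vec_mx u)))) (mxvec (PhiM Ks (Hmap (vec_mx u)) 1%:M)).
have HmapL : forall a W1 W2, Hmap (a *: W1 + W2) = a *: Hmap W1 + Hmap W2.
  by move=> a W1 W2; rewrite /Hmap mulmxDr !mulmxDl -scalemxAr -!scalemxAl.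
have vL : forall a (u v : 'rV[C]_(\rank J * \rank J)), vec_mx (a *: u + v) = a *: vec_mx u + vec_mx v.
  by move=> a u v; apply/matrixP => i j; rewrite !mxE.
have mL : forall n1 n2 a (X Y : 'M[C]_(n1, n2)), mxvec (a *: X + Y) = a *: mxvec X + mxvec Y.
  by move=> n1 n2 a X Y; rewrite linearP.
have fL : forall a u v, f (a *: u + v) = a *: f u + f v.
  move=> a u v; rewrite /f vL HmapL QcMD QcMZ PhiMD PhiMZ !mL.
  by rewrite scale_row_mx add_row_mx.
pose w := col_mx (trv d1) (- trv d2).
have fw : forall u, f u *m w = 0.
  by move=> u; rewrite /f /w mul_row_col mulmxN !trvE trace_PQ subrr.
have w0 : w != 0 by rewrite /w col_mx_eq0 negb_and trv_neq0.
have [u u0 fu0] := kernel_exists fL w0 fw Hr.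
set W := vec_mx u.
have W0 : W != 0 by rewrite /W vec_mx_eq0.
set H := Hmap W.
have [HQ0 HP0] : QcM Ks H = 0 /\ PhiM Ks H 1%:M = 0.
  move: fu0; rewrite /f -/W -/H -row_mx0 => /eq_row_mx [/eqP E1 /eqP E2].
  by rewrite !mxvec_eq0 in E1 E2; split; apply/eqP.
have TH : Tm Ks H != 0.
  rewrite /H key1; apply: contra W0 => /eqP E.
  by rewrite -(key2 W) E mulmx0 mul0mx.
have TmZero : forall Hh, (forall X, PhiM Ks Hh X = 0) -> Tm Ks Hh = 0.
  move=> Hh HX; have := choi_PhiM Hh; rewrite -/(Tm Ks Hh) => <-.
  rewrite /choi; apply: big1 => r' _; apply: big1 => s' _; by rewrite HX tensmx0.
have QcMB : forall H0, QcM Ks (H0 - hadj H0) = QcM Ks H0 - QcM Ks (hadj H0).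
  by move=> H0; rewrite -scaleN1r QcMD QcMZ scaleN1r.
have PhiMB : forall H0, PhiM Ks (H0 - hadj H0) 1%:M = PhiM Ks H0 1%:M - PhiM Ks (hadj H0) 1%:M.
  by move=> H0; rewrite -scaleN1r PhiMD PhiMZ scaleN1r.
set H1 := H + hadj H.
set H2 := 'i *: (H - hadj H).
have T1 : Tm Ks H1 = 0.
  apply: TmZero; apply: (perturb ext HPhi HA HB).
  - by rewrite /H1 hadjD hadjK addrC.
  - by rewrite /H1 PhiMD PhiM_hadj HP0 hadj0 addr0.
  - by rewrite /H1 QcMD QcM_hadj HQ0 hadj0 addr0.
have T2 : Tm Ks H2 = 0.
  apply: TmZero; apply: (perturb ext HPhi HA HB).
  - by rewrite /H2 hadjZ hadjD hadjN hadjK conjCi scaleNr -scalerN opprB.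
  - by rewrite /H2 PhiMZ PhiMB PhiM_hadj HP0 hadj0 subrr scaler0.
  - by rewrite /H2 QcMZ QcMB QcM_hadj HQ0 hadj0 subrr scaler0.
have E2 : H1 + (- 'i) *: H2 = 2%:R *: H.
  rewrite /H1 /H2 scalerA mulNr -expr2 sqrCi opprK scale1r.
  by rewrite addrACA subrr addr0 scaler_nat mulr2n.
have : Tm Ks (2%:R *: H) = 0 by rewrite -E2 TmD TmZ T1 T2 scaler0 addr0.
rewrite TmZ => /eqP; rewrite scaler_eq0 pnatr_eq0 /=.
by rewrite (negPf TH).
Qed.
End Work.

Local Close Scope ring_scope.

Theorem mainTheorem2 (R : realType) (d m : nat) :
  (2 <= d)%N -> (1 <= m)%N ->
  (d + m <= MR (Zmx R d m) (maxmixed R (d + m)))%N /\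
  ((d ^ 2 < 2 * m + 2 * d + 2)%N ->
   MR (Zmx R d m) (maxmixed R (d + m)) = (d + m)%N).
Proof.
move=> hd2 hm.
have hd : (0 < d)%N by apply: leq_trans hd2.
have lower : (d + m <= MR (Zmx R d m) (maxmixed R (d + m)))%N.
  have ext : extreme_point (CPset (Zmx R d m) (maxmixed R (d + m))) (PhiB (Bx R d m)).
    apply: PhiB_extreme; [| exact: Bx_diag | exact: Bx_nz | exact: Bx_Z].
    by rewrite invr_eq0 pnatr_eq0 addn_eq0 negb_and -lt0n hd.
  have rk := PhiB_rank (@Bx_r0_nz R d m hd).
  have lt : (choi_rank (PhiB (Bx R d m)) < (d * (d + m)).+1)%N.
    by rewrite ltnS /choi_rank rank_leq_row.
  apply: leq_trans rk _; rewrite /MR.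
  apply: (@leq_bigmax_cond _ _ (fun n : 'I__ => nat_of_ord n) (Ordinal lt)).
  by apply/asboolP; exists (PhiB (Bx R d m)); split.
split => // hsq.
apply/eqP; rewrite eqn_leq lower andbT /MR.
apply/bigmax_leqP => i /asboolP [Phi [ext rk]].
have := LS_bound hd ext; rewrite rk => hi.
rewrite -mulnn in hsq.
nia.
Qed.
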